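(* Let $v,\Omega:[0,\infty)\to\mathbb{R}^3$ be continuous, uniformly bounded signals, and let $(R,x)$ solve $\dot x=Rv$, $\dot R=R\Omega_\times$, with $X=\mathcal{T}(R,x)$. Let $X_e=\mathcal{T}(Q,\xi)$ solve $\dot X_e=X_eU^\vee$ with $U^\vee=\begin{pmatrix}\Omega_\times&v\\0&0\end{pmatrix}$ and arbitrary $X_e(0)\in SE(3)$. Let $X_c=\mathcal{T}(Q_c,\xi_c)\in SE(3)$ be the constant matrix with $X_e(t)=X_cX(t)$ for all $t\ge0$, namely $X_c=X_e(0)X(0)^{-1}$. Let $z_1,\dots,z_n\in\mathbb{R}^3$ be constant landmark positions with $z_i\neq x(t)$ for all $t\ge0$ and all $i$. Define $$z_i^v(t):=\xi(t)+Q(t)R(t)^\top\big(z_i-x(t)\big),$$ $$y_i(t):=R(t)^\top\frac{z_i-x(t)}{|z_i-x(t)|},\qquad y_i^v(t):=Q(t)^\top\frac{z_i^v(t)-\xi(t)}{|z_i^v(t)-\xi(t)|}.$$ Then for every $i\in\{1,\dots,n\}$: 1) $z_i^v(t)=\xi_c+Q_cz_i$ for all $t\ge0$; in particular $z_i^v$ is constant. 2) $y_i^v(t)=y_i(t)$ for all $t\ge0$.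
   Context: For $a\in\mathbb{R}^3$, $a_\times$ denotes the skew-symmetric matrix with $a_\times b=a\times b$. We write $$\mathcal{T}(R,x)=\begin{pmatrix}R&x\\0&1\end{pmatrix}\in SE(3),\qquad R\in SO(3),\ x\in\mathbb{R}^3.$$ $|\cdot|$ is the Euclidean norm. *)

(* Defs.v *)
From HB Require Import structures.
From mathcomp Require Import all_boot all_order all_algebra.
From mathcomp Require Import all_classical all_reals all_analysis.
Set Implicit Arguments. Unset Strict Implicit. Unset Printing Implicit Defensive.
Import Order.TTheory GRing.Theory Num.Theory numFieldNormedType.Exports.
Local Open Scope ring_scope.

Section defs.
Variable R : realType.

Definition vnorm (w : 'cV[R]_3) : R := Num.sqrt (\sum_(i < 3) w i ord0 ^+ 2).

(* a_x : crossmx-symmetric matrix with a_x b = a x b *)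
Definition crossmx (a : 'cV[R]_3) : 'M[R]_3 :=
  let a1 := a (@Ordinal 3 0 erefl) ord0 in
  let a2 := a (@Ordinal 3 1 erefl) ord0 in
  let a3 := a (@Ordinal 3 2 erefl) ord0 in
  \matrix_(i < 3, j < 3)
    nth 0 (nth [::] [:: [:: 0; - a3; a2];
                       [:: a3; 0; - a1];
                       [:: - a2; a1; 0]] i) j.

Definition SO3 (M : 'M[R]_3) : Prop := M^T *m M = 1%:M /\ \det M = 1.

Definition Tmx (M : 'M[R]_3) (x : 'cV[R]_3) : 'M[R]_(3 + 1) :=
  block_mx M x 0 1%:M.

Definition Uvee (Om v : 'cV[R]_3) : 'M[R]_(3 + 1) :=
  block_mx (crossmx Om) v 0 0.

Definition bounded_signal (s : R -> 'cV[R]_3) : Prop :=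
  exists M : R, forall t, 0 <= t -> vnorm (s t) <= M.

End defs.

(* Main.v *)
Require Import Defs.
From HB Require Import structures.
From mathcomp Require Import all_boot all_order all_algebra.
From mathcomp Require Import all_classical all_reals all_analysis.
Import Order.TTheory GRing.Theory Num.Theory numFieldNormedType.Exports.
Local Open Scope ring_scope.
Local Open Scope classical_set_scope.
Set Implicit Arguments. Unset Strict Implicit.

Section H.
Variable R : realType.

Lemma ler_entry m n (M : 'M[R]_(m, n)) i j : `|M i j| <= `|M|.
Proof.
rewrite [leRHS]/Num.Def.normr /= mx_normrE.
exact: (le_bigmax _ (fun ij : 'I_m * 'I_n => `|M ij.1 ij.2|) (i, j)).
Qed.

Lemma entry_cont (T : topologicalType) m n (F : T -> 'M[R]_(m, n)) i j :
  continuous F -> continuous (fun s => F s i j).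
Proof.
move=> cF s; apply/cvgrPdist_le => e e0.
have := (cvgrPdist_le _ _).1 (cF s) e e0.
move=> H; near=> y.
have Hy : `|F s - F y| <= e by near: y; exact: H.
apply: le_trans Hy.
by have := @ler_entry _ _ (F s - F y) i j; rewrite !mxE.
Unshelve. all: by end_near. Qed.

Lemma mx_cont (T : topologicalType) m n (F : T -> 'M[R]_(m, n)) :
  (forall i j, continuous (fun s => F s i j)) -> continuous F.
Proof.
move=> H s; apply/cvgrPdist_le => e e0.
have : \forall y \near s, forall i j, `|F s i j - F y i j| <= e.
  apply: filter_forall => i; apply: filter_forall => j.
  exact: (cvgrPdist_le _ _).1 (H i j s) e e0.
move=> Hn; near=> y.
rewrite /Num.Def.normr/= mx_normrE (bigmax_le _ (ltW e0)) //= => -[i j] _.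
rewrite !mxE /=; move: i j; near: y; exact: Hn.
Unshelve. all: by end_near. Qed.

Lemma sum_cont (T : topologicalType) (I : Type) (r : seq I) (h : I -> T -> R) :
  (forall k, continuous (h k)) -> continuous (fun s => \sum_(k <- r) h k s).
Proof.
move=> H; elim: r => [|a r IH].
  under eq_fun do rewrite big_nil; exact: cst_continuous.
under eq_fun do rewrite big_cons.
by move=> s; apply: continuousD; [exact: H|exact: IH].
Qed.

Lemma mulmx_cont (T : topologicalType) m n p (A : T -> 'M[R]_(m, n)) (B : T -> 'M[R]_(n, p)) :
  continuous A -> continuous B -> continuous (fun s => A s *m B s).
Proof.
move=> cA cB; apply: mx_cont => i j.
under eq_fun do rewrite mxE.
apply: sum_cont => k s; apply: continuousM.
  exact: entry_cont.
exact: (@entry_cont _ _ _ B k j cB s).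
Qed.

Lemma trmx_cont (T : topologicalType) m n (A : T -> 'M[R]_(m, n)) :
  continuous A -> continuous (fun s => (A s)^T).
Proof.
move=> cA; apply: mx_cont => i j; under eq_fun do rewrite !mxE.
exact: (@entry_cont _ _ _ A _ _ cA).
Qed.

Lemma ul_cont (T : topologicalType) m1 m2 n1 n2 (A : T -> 'M[R]_(m1 + m2, n1 + n2)) :
  continuous A -> continuous (fun s => ulsubmx (A s)).
Proof.
move=> cA; apply: mx_cont => i j; under eq_fun do rewrite !mxE.
exact: (@entry_cont _ _ _ A _ _ cA).
Qed.

Lemma ur_cont (T : topologicalType) m1 m2 n1 n2 (A : T -> 'M[R]_(m1 + m2, n1 + n2)) :
  continuous A -> continuous (fun s => ursubmx (A s)).
Proof.
move=> cA; apply: mx_cont => i j; under eq_fun do rewrite !mxE.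
exact: (@entry_cont _ _ _ A _ _ cA).
Qed.

Lemma entry_is_derive m n (M : R -> 'M[R]_(m, n)) (t : R) (D : 'M[R]_(m, n)) i j :
  is_derive t 1 M D -> is_derive t 1 (fun s => M s i j) (D i j).
Proof.
move=> [dM eD].
have /derivable_mxP/(_ i j) dij := dM.
apply: DeriveDef => //.
by rewrite -eD derive_mx // mxE.
Qed.

Lemma mx_is_derive m n (M : R -> 'M[R]_(m, n)) (t : R) (D : 'M[R]_(m, n)) :
  (forall i j, is_derive t 1 (fun s => M s i j) (D i j)) -> is_derive t 1 M D.
Proof.
move=> H.
have dM : derivable M t 1 by apply/derivable_mxP => i j; case: (H i j).
apply: DeriveDef => //; rewrite derive_mx //; apply/matrixP => i j.
by rewrite mxE; case: (H i j).
Qed.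

Lemma mulmx_is_derive m n p (A : R -> 'M[R]_(m, n)) (B : R -> 'M[R]_(n, p)) (t : R) dA dB :
  is_derive t 1 A dA -> is_derive t 1 B dB ->
  is_derive t 1 (fun s => A s *m B s) (dA *m B t + A t *m dB).
Proof.
move=> hA hB; apply: mx_is_derive => i j.
rewrite !mxE -big_split /=.
under eq_fun do rewrite mxE.
have -> : (fun s => \sum_j0 A s i j0 * B s j0 j) =
   \sum_(j0 < n) (fun s => A s i j0 * B s j0 j).
  by apply/funext => s; rewrite fct_sumE.
apply: is_derive_sum => k.
have := is_deriveM (@entry_is_derive _ _ _ _ _ i k hA) (@entry_is_derive _ _ _ _ _ k j hB).
move=> H; apply: is_derive_eq H _; rewrite addrC; congr (_ + _); exact: mulrC. Qed.

Lemma trmx_is_derive m n (A : R -> 'M[R]_(m, n)) (t : R) dA :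
  is_derive t 1 A dA -> is_derive t 1 (fun s => (A s)^T) dA^T.
Proof.
move=> hA; apply: mx_is_derive => i j; rewrite mxE.
under eq_fun do rewrite mxE. exact: entry_is_derive.
Qed.

Lemma ul_is_derive m1 m2 n1 n2 (A : R -> 'M[R]_(m1 + m2, n1 + n2)) (t : R) dA :
  is_derive t 1 A dA -> is_derive t 1 (fun s => ulsubmx (A s)) (ulsubmx dA).
Proof.
move=> hA; apply: mx_is_derive => i j; rewrite !mxE.
under eq_fun do rewrite !mxE. exact: entry_is_derive.
Qed.

Lemma ur_is_derive m1 m2 n1 n2 (A : R -> 'M[R]_(m1 + m2, n1 + n2)) (t : R) dA :
  is_derive t 1 A dA -> is_derive t 1 (fun s => ursubmx (A s)) (ursubmx dA).
Proof.
move=> hA; apply: mx_is_derive => i j; rewrite !mxE.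
under eq_fun do rewrite !mxE. exact: entry_is_derive.
Qed.


Lemma add_cont (T : topologicalType) m n (A B : T -> 'M[R]_(m, n)) :
  continuous A -> continuous B -> continuous (fun s => A s + B s).
Proof. by move=> cA cB s; exact: cvgD (cA s) (cB s). Qed.

Lemma sub_cont (T : topologicalType) m n (A B : T -> 'M[R]_(m, n)) :
  continuous A -> continuous B -> continuous (fun s => A s - B s).
Proof. by move=> cA cB s; exact: cvgB (cA s) (cB s). Qed.

Lemma crossmx_tr (a : 'cV[R]_3) : (crossmx a)^T = - crossmx a.
Proof.
apply/matrixP => i j; rewrite !mxE.
case: i => [[|[|[|i]]]] Hi //=; case: j => [[|[|[|j]]]] Hj //=;
  by rewrite ?opprK ?oppr0.
Qed.

Lemma orth_rev (M : 'M[R]_3) : M^T *m M = 1%:M -> M *m M^T = 1%:M.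
Proof. exact: mulmx1C. Qed.

Lemma alg0 (Q Rm : 'M[R]_3) (Om v w : 'cV[R]_3) : Rm^T *m Rm = 1%:M ->
  Q *m v + (Q *m crossmx Om *m Rm^T + Q *m (Rm *m crossmx Om)^T) *m w
  + Q *m Rm^T *m (0 - Rm *m v) = 0.
Proof.
move=> HR.
rewrite trmx_mul crossmx_tr mulNmx mulmxN mulmxA addrN mul0mx addr0.
by rewrite sub0r mulmxN -!mulmxA (mulmxA Rm^T) HR mul1mx addrN.
Qed.

Lemma vnormE (w : 'cV[R]_3) : vnorm w = Num.sqrt ((w^T *m w) ord0 ord0).
Proof.
rewrite /vnorm mxE; congr Num.sqrt; apply: eq_bigr => k _.
by rewrite mxE expr2.
Qed.

Lemma vnorm_orth (M : 'M[R]_3) (w : 'cV[R]_3) : M^T *m M = 1%:M ->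
  vnorm (M *m w) = vnorm w.
Proof.
move=> HM; rewrite !vnormE trmx_mul -mulmxA (mulmxA M^T) HM mul1mx //.
Qed.

Lemma Tmx_inv (Rm : 'M[R]_3) (x : 'cV[R]_3) : Rm^T *m Rm = 1%:M ->
  invmx (Tmx Rm x) = Tmx Rm^T (- (Rm^T *m x)).
Proof.
move=> HR.
have H : Tmx Rm x *m Tmx Rm^T (- (Rm^T *m x)) = 1%:M.
  rewrite /Tmx mulmx_block orth_rev // !mulmx0 !mul0mx !mulmx1 ?mul1mx !addr0 ?add0r.
  by rewrite mulmxN mulmxA orth_rev // mul1mx addNr scalar_mx_block.
have [U1 U2] := mulmx1_unit H.
by rewrite -[RHS]mul1mx -(mulVmx U1) -mulmxA H mulmx1.
Qed.

End H.

Unset Implicit Arguments. Set Strict Implicit.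

Theorem lemma2 (R : realType) (v Om : R -> 'cV[R]_3)
  (Rt : R -> 'M[R]_3) (x : R -> 'cV[R]_3)
  (Q : R -> 'M[R]_3) (xi : R -> 'cV[R]_3)
  (n : nat) (z : 'I_n -> 'cV[R]_3) :
  (* continuous, uniformly bounded signals on [0, oo) *)
  {within [set t : R | 0 <= t], continuous v} -> {within [set t : R | 0 <= t], continuous Om} ->
  bounded_signal v -> bounded_signal Om ->
  (* (R, x) solves xdot = R v, Rdot = R Omega_x on [0, oo), with R in SO(3) *)
  (forall t : R, 0 <= t -> SO3 (Rt t)) ->
  {within [set t : R | 0 <= t], continuous Rt} -> {within [set t : R | 0 <= t], continuous x} ->
  (forall t : R, 0 < t -> is_derive t (1 : R) x (Rt t *m v t)) ->
  (forall t : R, 0 < t -> is_derive t (1 : R) Rt (Rt t *m crossmx (Om t))) ->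
  (* X_e = T(Q, xi) in SE(3) solves X_e dot = X_e U^vee on [0, oo) *)
  (forall t : R, 0 <= t -> SO3 (Q t)) ->
  {within [set t : R | 0 <= t], continuous (fun s => Tmx (Q s) (xi s))} ->
  (forall t : R, 0 < t -> is_derive t (1 : R) (fun s => Tmx (Q s) (xi s))
                        (Tmx (Q t) (xi t) *m Uvee (Om t) (v t))) ->
  (* landmarks never coincide with the vehicle position *)
  (forall i (t : R), 0 <= t -> z i != x t) ->
  let Xc := Tmx (Q 0) (xi 0) *m invmx (Tmx (Rt 0) (x 0)) in
  let Qc : 'M[R]_3 := ulsubmx Xc in
  let xic : 'cV[R]_3 := ursubmx Xc in
  let zv i t := xi t + Q t *m (Rt t)^T *m (z i - x t) in
  let y i t := (Rt t)^T *m ((vnorm (z i - x t))^-1 *: (z i - x t)) in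
  let yv i t := (Q t)^T *m ((vnorm (zv i t - xi t))^-1 *: (zv i t - xi t)) in
  forall i (t : R), 0 <= t -> zv i t = xic + Qc *m z i /\ yv i t = y i t.
Proof.
move=> cv cOm bv bOm SR cR cx dx dR SQ cT dT zx Xc Qc xic zv y yv i t t0.
pose W := [set t : R | 0 <= t].
have eQf : (fun s => ulsubmx (Tmx (Q s) (xi s))) = Q.
  by apply/funext => s; rewrite /Tmx block_mxKul.
have exf : (fun s => ursubmx (Tmx (Q s) (xi s))) = xi.
  by apply/funext => s; rewrite /Tmx block_mxKur.
have dg : forall s : R, 0 < s -> is_derive s (1 : R) (zv i) 0.
  move=> s s0.
  have hQ : is_derive s 1 Q (Q s *m crossmx (Om s)).
    rewrite -{1}eQf.
    have := ul_is_derive (dT s s0).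
    by rewrite /Tmx /Uvee mulmx_block block_mxKul mulmx0 addr0.
  have hxi : is_derive s 1 xi (Q s *m v s).
    rewrite -{1}exf.
    have := ur_is_derive (dT s s0).
    by rewrite /Tmx /Uvee mulmx_block block_mxKur mulmx0 addr0.
  have h1 := mulmx_is_derive hQ (trmx_is_derive (dR s s0)).
  have h2 := is_deriveB (is_derive_cst (z i) s 1) (dx s s0).
  have h3 := mulmx_is_derive h1 h2.
  have h4 := is_deriveD hxi h3.
  apply: (is_derive_eq h4).
  by rewrite addrA; exact: alg0 (SR s (ltW s0)).1.
have cg : {within W, continuous (zv i)}.
  have cQ : {within W, continuous Q}.
    rewrite -eQf; exact: ul_cont cT.
  have cxi : {within W, continuous xi}.
    rewrite -exf; exact: ur_cont cT.
  apply: add_cont => //; apply: mulmx_cont.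
    by apply: mulmx_cont => //; exact: trmx_cont.
  by apply: sub_cont => //; exact: cst_continuous.
have key : zv i t = zv i 0.
  apply/matrixP => k j; rewrite (ord1 j).
  have [->//|tn0] := eqVneq t 0.
  have tp : 0 < t by rewrite lt_neqAle eq_sym tn0.
  have Hd : forall u, u \in `]0, t[%R -> is_derive u 1 (fun u => zv i u k ord0) 0.
    move=> u; rewrite in_itv /= => /andP[u0 _].
    have := entry_is_derive k ord0 (dg u u0); by rewrite mxE.
  have Hc : {within `[0, t], continuous (fun u => zv i u k ord0)}.
    apply: (@continuous_subspaceW _ _ _ W (fun u => zv i u k ord0)).
      by move=> u; rewrite /= in_itv /= => /andP[].
    have H := entry_cont (i:=k) (j:=ord0) cg; exact H.
  have [c _] := MVT_segment (ltW tp) Hd Hc.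
  by rewrite mul0r => /eqP; rewrite subr_eq0 => /eqP.
have [HR0 _] := SR 0 (lexx 0).
have [HRt _] := SR t t0.
have [HQt _] := SQ t t0.
split.
  rewrite key /zv /xic /Qc /Xc Tmx_inv // /Tmx mulmx_block block_mxKul block_mxKur.
  rewrite !mulmx0 !addr0 mulmx1 mulmxBr mulmxN mulmxA.
  by rewrite [- _ + xi 0]addrC -addrA [_ *m z i - _]addrC.
rewrite /yv /y.
have -> : zv i t - xi t = Q t *m (Rt t)^T *m (z i - x t).
  by rewrite /zv addrC addKr.
rewrite vnorm_orth; last first.
  by rewrite trmx_mul trmxK -mulmxA (mulmxA (Q t)^T) HQt mul1mx orth_rev.
by rewrite !scalemxAr !mulmxA HQt mul1mx.
Qed.
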